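(* Let $L^x,L^y>0$, let $i\neq j$ be two boxes, each box $k\in\{i,j\}$ having center $(c^x_k,c^y_k)$, side lengths $(\ell^x_k,\ell^y_k)$ and given constants $lb^s_k>0$. Let $$Q^{lb}=\{(c_i,c_j,\ell_i,\ell_j)\in\mathbb{R}^8:\ \tfrac12\ell^s_k\le c^s_k\le L^s-\tfrac12\ell^s_k,\ \ell^s_k\ge lb^s_k\ \ \forall s\in\{x,y\},k\in\{i,j\}\}.$$ Let $E$ be the set of $(c_i,c_j,\ell_i,\ell_j,w)\in\mathbb{R}^8\times\{0,1\}^2$ with $(c_i,c_j,\ell_i,\ell_j)\in Q^{lb}$ and such that: $w=(0,0)$ implies $\mathscr{B}_i\leftarrow_y\mathscr{B}_j$; $w=(1,0)$ implies $\mathscr{B}_i\leftarrow_x\mathscr{B}_j$; $w=(1,1)$ implies $\mathscr{B}_j\leftarrow_y\mathscr{B}_i$; $w=(0,1)$ implies $\mathscr{B}_j\leftarrow_x\mathscr{B}_i$. Then $E$ equals the set of $(c_i,c_j,\ell_i,\ell_j,w)$ satisfying \begin{align*} &\tfrac12\ell^s_p\le c^s_p\le L^s-\tfrac12\ell^s_p,\quad \ell^s_p\ge lb^s_p\qquad\forall s\in\{x,y\},p\in\{i,j\},\\ &c^y_i+\tfrac12\ell^y_i\le c^y_j-\tfrac12\ell^y_j+L^y(w_1+w_2),\\ &c^x_i+\tfrac12\ell^x_i\le c^x_j-\tfrac12\ell^x_j+L^x(1-w_1+w_2),\\ &c^y_j+\tfrac12\ell^y_j\le c^y_i-\tfrac12\ell^y_i+L^y(2-w_1-w_2),\\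 &c^x_j+\tfrac12\ell^x_j\le c^x_i-\tfrac12\ell^x_i+L^x(1+w_1-w_2),\\ &w\in\{0,1\}^2. \end{align*}
   Context: Box $\mathscr{B}_p$ precedes box $\mathscr{B}_q$ in direction $s\in\{x,y\}$, written $\mathscr{B}_p\leftarrow_s\mathscr{B}_q$, if $c^s_p+\tfrac12\ell^s_p\le c^s_q-\tfrac12\ell^s_q$. $E$ is the embedding $\operatorname{Em}(Q^{lb},D^4,GB^4)$ of the four-branch non-overlap disjunction with the two-bit Gray encoding. *)

(* Defs.v *)
(* the statement is purely order-theoretic over the reals,
   stated for an arbitrary real field R (includes the real numbers). *)
From HB Require Import structures.
From mathcomp Require Import all_boot all_order all_algebra.
Set Implicit Arguments. Unset Strict Implicit. Unset Printing Implicit Defensive.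
Import Order.TTheory GRing.Theory Num.Theory.
Local Open Scope ring_scope.

Inductive dir := DX | DY.

Record box (R : realFieldType) := Box { bcx : R; bcy : R; blx : R; bly : R }.

Definition cen (R : realFieldType) (s : dir) (b : box R) : R :=
  match s with DX => bcx b | DY => bcy b end.
Definition len (R : realFieldType) (s : dir) (b : box R) : R :=
  match s with DX => blx b | DY => bly b end.

Definition precedes (R : realFieldType) (s : dir) (p q : box R) : Prop :=
  cen s p + len s p / 2%:R <= cen s q - len s q / 2%:R.

Definition box_in_Qlb (R : realFieldType) (L lb : dir -> R) (b : box R) : Prop :=
  forall s : dir,
    len s b / 2%:R <= cen s b /\ cen s b <= L s - len s b / 2%:R /\ lb s <= len s b.

Definition in_Qlb (R : realFieldType) (L lbi lbj : dir -> R) (bi bj : box R) : Prop :=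
  box_in_Qlb L lbi bi /\ box_in_Qlb L lbj bj.

Definition is01 (R : realFieldType) (w : R) : Prop := w = 0 \/ w = 1.

(* Membership in E (the four-branch non-overlap disjunction with the Gray encoding). *)
Definition in_E (R : realFieldType) (L lbi lbj : dir -> R) (bi bj : box R) (w1 w2 : R) : Prop :=
  (is01 w1 /\ is01 w2) /\ in_Qlb L lbi lbj bi bj /\
      (w1 = 0 /\ w2 = 0 -> precedes DY bi bj) /\
      (w1 = 1 /\ w2 = 0 -> precedes DX bi bj) /\
      (w1 = 1 /\ w2 = 1 -> precedes DY bj bi) /\
      (w1 = 0 /\ w2 = 1 -> precedes DX bj bi).

Definition in_Em (R : realFieldType) (L lbi lbj : dir -> R) (bi bj : box R) (w1 w2 : R) : Prop :=
  (box_in_Qlb L lbi bi /\ box_in_Qlb L lbj bj) /\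
      bcy bi + bly bi / 2%:R <= bcy bj - bly bj / 2%:R + L DY * (w1 + w2) /\
      bcx bi + blx bi / 2%:R <= bcx bj - blx bj / 2%:R + L DX * (1 - w1 + w2) /\
      bcy bj + bly bj / 2%:R <= bcy bi - bly bi / 2%:R + L DY * (2%:R - w1 - w2) /\
      bcx bj + blx bj / 2%:R <= bcx bi - blx bi / 2%:R + L DX * (1 + w1 - w2) /\
      (is01 w1 /\ is01 w2).

(* Main.v *)
Require Import Defs.
From HB Require Import structures.
From mathcomp Require Import all_boot all_order all_algebra.
From mathcomp Require Import ring lra.
Import Order.TTheory GRing.Theory Num.Theory.
Local Open Scope ring_scope.

Theorem proposition5p2 (R : realFieldType) (L lbi lbj : dir -> R)
  (hL : forall s, 0 < L s) (hlbi : forall s, 0 < lbi s) (hlbj : forall s, 0 < lbj s)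
  (bi bj : box R) (w1 w2 : R) :
  in_E L lbi lbj bi bj w1 w2 <-> in_Em L lbi lbj bi bj w1 w2.
Proof.
have hLx := hL DX; have hLy := hL DY.
destruct bi as [cix ciy lix liy]; destruct bj as [cjx cjy ljx ljy].
rewrite /in_E /in_Em /in_Qlb /precedes /=.
split.
- move=> [[h1 h2] [[Qi Qj] [P1 [P2 [P3 P4]]]]].
  have := Qi DX; have := Qi DY; have := Qj DX; have := Qj DY; rewrite /=.
  move=> [a1 [a2 a3]] [b1 [b2 b3]] [c1 [c2 c3]] [d1 [d2 d3]].
  split; first by split.
  case: h1 => E1; case: h2 => E2; rewrite E1 E2.
  + have := P1 (conj E1 E2); rewrite /=; move=> p.
    split; [lra|split; [lra|split; [lra|split; [lra|split; [left|left]]]]] => //.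
  + have := P4 (conj E1 E2); rewrite /=; move=> p.
    split; [lra|split; [lra|split; [lra|split; [lra|split; [left|right]]]]] => //.
  + have := P2 (conj E1 E2); rewrite /=; move=> p.
    split; [lra|split; [lra|split; [lra|split; [lra|split; [right|left]]]]] => //.
  + have := P3 (conj E1 E2); rewrite /=; move=> p.
    split; [lra|split; [lra|split; [lra|split; [lra|split; [right|right]]]]] => //.
- move=> [[Qi Qj] [e1 [e2 [e3 [e4 [h1 h2]]]]]].
  split; first by split.
  split; first by split.
  split; [move=> [E1 E2]|split; [move=> [E1 E2]|split; move=> [E1 E2]]];
    rewrite E1 E2 in e1 e2 e3 e4; lra.
Qed.
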